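(* (Soundness) For every sequent $\Gamma\vdash\Delta$ of $\text{HXPath}_{\rm D}$: if $\Gamma\vdash\Delta$ is provable in $\mathbf{G}$ (written $\Gamma\vdash_{\mathbf G}\Delta$), then $\Gamma\vdash\Delta$ is valid.
   Context: Syntax of $\text{HXPath}_{\rm D}$: fix pairwise disjoint sets $\mathsf{Prop}$ (propositions, countably infinite), $\mathsf{Nom}$ (nominals, countably infinite), $\mathsf{Mod}$ (modalities, finite), $\mathsf{Cmp}$ (comparisons, finite). Path expressions $\alpha,\beta ::= \mathsf{a} \mid i{:} \mid \varphi? \mid \alpha\beta$ and node expressions $\varphi,\psi ::= p \mid i \mid \bot \mid \varphi\to\psi \mid @_i\varphi \mid \langle \mathsf{a}\rangle\varphi \mid \langle\alpha =_{\mathsf{c}} \beta\rangle \mid \langle \alpha\neq_{\mathsf{c}}\beta\rangle$, with $p\in\mathsf{Prop}$, $i\in\mathsf{Nom}$, $\mathsf{a}\in\mathsf{Mod}$, $\mathsf{c}\in\mathsf{Cmp}$. Abbreviations: $\top:=\bot\to\bot$, $\neg\varphi:=\varphi\to\bot$, $\varphi\lor\psi := \neg\varphi\to\psi$, $\varphi\land\psi:=\neg(\varphi\to\neg\psi)$, $\varphi\leftrightarrow\psi$ as usual; $\epsilon:=\top?$; $\langle j{:}\rangle\varphi := @_j\varphi$, $\langle\psi?\rangle\varphi:=\psi\land\varphi$, $\langle\alpha\beta\rangle\varphi:=\langle\alpha\rangle\langle\beta\rangle\varphi$, $[\alpha]\varphi:=\neg\langle\alpha\rangle\neg\varphi$.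 The symbol $\blacktriangle$ stands for either $=_{\mathsf{c}}$ or $\neq_{\mathsf{c}}$ (for some $\mathsf{c}$). Models: $\mathcal{M}=\langle N,\{R_{\mathsf a}\}_{\mathsf a\in\mathsf{Mod}},\{\approx_{\mathsf c}\}_{\mathsf c\in\mathsf{Cmp}},g,V\rangle$ with $N\neq\emptyset$, each $R_{\mathsf a}\subseteq N\times N$, each $\approx_{\mathsf c}$ an equivalence relation on $N$, $g:\mathsf{Nom}\to N$, $V:\mathsf{Prop}\to 2^N$. Semantics: $\mathcal M,n,n'\Vdash \mathsf a$ iff $nR_{\mathsf a}n'$; $\mathcal M,n,n'\Vdash i{:}$ iff $g(i)=n'$; $\mathcal M,n,n'\Vdash\varphi?$ iff $n=n'$ and $\mathcal M,n\Vdash\varphi$; $\mathcal M,n,n'\Vdash\alpha\beta$ iff there is $n''$ with $\mathcal M,n,n''\Vdash\alpha$ and $\mathcal M,n'',n'\Vdash\beta$; $\mathcal M,n\Vdash p$ iff $n\in V(p)$; $\mathcal M,n\Vdash i$ iff $g(i)=n$; $\bot$ never holds; $\to$ classical; $\mathcal M,n\Vdash @_i\varphi$ iff $\mathcal M,g(i)\Vdash\varphi$; $\mathcal M,n\Vdash\langle\mathsf a\rangle\varphi$ iff some $n'$ has $nR_{\mathsf a}n'$ and $\mathcal M,n'\Vdash\varphi$; $\mathcal M,n\Vdash\langle\alpha=_{\mathsf c}\beta\rangle$ (resp. $\langle\alpha\neq_{\mathsf c}\beta\rangle$) iff there are $n',n''$ with $\mathcal M,n,n'\Vdash\alpha$,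 $\mathcal M,n,n''\Vdash\beta$ and $n'\approx_{\mathsf c}n''$ (resp. $n'\not\approx_{\mathsf c}n''$). Sequents: a sequent $\Gamma\vdash\Delta$ consists of finite (possibly empty) sets $\Gamma,\Delta$ of node expressions each of the form $\langle i{:}\blacktriangle j{:}\rangle$ or $@_i\varphi$. It is valid iff for every model $\mathcal M$ and node $n$, if $\mathcal M,n\Vdash\gamma$ for all $\gamma\in\Gamma$ then $\mathcal M,n\Vdash\delta$ for some $\delta\in\Delta$. Notation ''$\varphi,\Gamma$'' means $\{\varphi\}\cup\Gamma$. The calculus $\mathbf{G}$ (each rule written premisses $\Rightarrow$ conclusion): (Ax) axiom $\varphi,\Gamma\vdash\Delta,\varphi$ where $\varphi$ is of the form $@_ip$, $@_ij$ or $\langle i{:}=_{\mathsf c}j{:}\rangle$; ($\bot$) axiom $@_i\bot,\Gamma\vdash\Delta$; ($\to$L) $\Gamma\vdash\Delta,@_i\varphi$ and $@_i\psi,\Gamma\vdash\Delta$ $\Rightarrow$ $@_i(\varphi\to\psi),\Gamma\vdash\Delta$; ($\to$R) $@_i\varphi,\Gamma\vdash\Delta,@_i\psi\Rightarrow\Gamma\vdash\Delta,@_i(\varphi\to\psi)$; ($@$T) $@_ii,\Gamma\vdash\Delta\Rightarrow\Gamma\vdash\Delta$; ($@5$) $@_jk,@_ij,@_ik,\Gamma\vdash\Delta\Rightarrow @_ij,@_ik,\Gamma\vdash\Delta$; (Nom) $@_ij,\Gamma\vdash\Delta\Rightarrow\Gamma\vdash\Delta$, $j$ not in the conclusion; (S$_1$)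 $@_j\varphi,@_ij,@_i\varphi,\Gamma\vdash\Delta\Rightarrow @_ij,@_i\varphi,\Gamma\vdash\Delta$, $\varphi$ of the form $p$, $\bot$ or $\langle\mathsf a\rangle k$; (S$_2$) $@_i\langle\mathsf a\rangle k,@_jk,@_i\langle\mathsf a\rangle j,\Gamma\vdash\Delta\Rightarrow @_jk,@_i\langle\mathsf a\rangle j,\Gamma\vdash\Delta$; (S$_3$) $\langle j{:}=_{\mathsf c}k{:}\rangle,@_ij,\langle i{:}=_{\mathsf c}k{:}\rangle,\Gamma\vdash\Delta\Rightarrow @_ij,\langle i{:}=_{\mathsf c}k{:}\rangle,\Gamma\vdash\Delta$; ($@$L) $@_i\varphi,\Gamma\vdash\Delta\Rightarrow @_j@_i\varphi,\Gamma\vdash\Delta$; ($@$R) $\Gamma\vdash\Delta,@_i\varphi\Rightarrow\Gamma\vdash\Delta,@_j@_i\varphi$; ($\langle\mathsf a\rangle$L) $@_i\langle\mathsf a\rangle j,@_j\varphi,\Gamma\vdash\Delta\Rightarrow @_i\langle\mathsf a\rangle\varphi,\Gamma\vdash\Delta$, $j$ not in the conclusion; ($\langle\mathsf a\rangle$R) $@_i\langle\mathsf a\rangle j,\Gamma\vdash\Delta,@_i\langle\mathsf a\rangle\varphi,@_j\varphi\Rightarrow @_i\langle\mathsf a\rangle j,\Gamma\vdash\Delta,@_i\langle\mathsf a\rangle\varphi$; ($\langle\blacktriangle\rangle$L) $@_i\langle\alpha\rangle j,@_i\langle\beta\rangle k,\langle j{:}\blacktriangle k{:}\rangle,\Gamma\vdash\Delta\Rightarrow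 @_i\langle\alpha\blacktriangle\beta\rangle,\Gamma\vdash\Delta$, $j,k$ distinct and not in the conclusion; ($\langle\blacktriangle\rangle$R) $@_i\langle\alpha\rangle j,@_i\langle\beta\rangle k,\Gamma\vdash\Delta,@_i\langle\alpha\blacktriangle\beta\rangle,\langle j{:}\blacktriangle k{:}\rangle\Rightarrow @_i\langle\alpha\rangle j,@_i\langle\beta\rangle k,\Gamma\vdash\Delta,@_i\langle\alpha\blacktriangle\beta\rangle$; (EqT) $\langle i{:}=_{\mathsf c}i{:}\rangle,\Gamma\vdash\Delta\Rightarrow\Gamma\vdash\Delta$; (Eq5) $\langle j{:}=_{\mathsf c}k{:}\rangle,\langle i{:}=_{\mathsf c}j{:}\rangle,\langle i{:}=_{\mathsf c}k{:}\rangle,\Gamma\vdash\Delta\Rightarrow\langle i{:}=_{\mathsf c}j{:}\rangle,\langle i{:}=_{\mathsf c}k{:}\rangle,\Gamma\vdash\Delta$; (NEqL) $\Gamma\vdash\Delta,\langle i{:}=_{\mathsf c}j{:}\rangle\Rightarrow\langle i{:}\neq_{\mathsf c}j{:}\rangle,\Gamma\vdash\Delta$; (NEqR) $\langle i{:}=_{\mathsf c}j{:}\rangle,\Gamma\vdash\Delta\Rightarrow\Gamma\vdash\Delta,\langle i{:}\neq_{\mathsf c}j{:}\rangle$; (Cut) $\Gamma\vdash\Delta,\varphi$ and $\varphi,\Gamma'\vdash\Delta'\Rightarrow\Gamma,\Gamma'\vdash\Delta,\Delta'$; (WL) $\Gamma\vdash\Delta\Rightarrow\varphi,\Gamma\vdash\Delta$;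 (WR) $\Gamma\vdash\Delta\Rightarrow\Gamma\vdash\Delta,\varphi$. Here $@_i\langle\alpha\rangle j$ for a path $\alpha$ is understood via the abbreviations above. A derivation is a finite tree of sequents in which each non-leaf node is the conclusion of an instance of a rule of $\mathbf G$ whose premisses are its children. A sequent is provable in $\mathbf G$ if it is the root of a derivation all of whose leaves are instances of (Ax) or ($\bot$). *)

(* Defs.v *)
From Stdlib Require Import List.
Import ListNotations.
Set Implicit Arguments.

Section Syntax.
Variables (Mod Cmp : Type).

(* Prop = nat (propositions), Nom = nat (nominals): both countably infinite. *)
Inductive path : Type :=
| PMod  : Mod -> path
| PNom  : nat -> path
| PTest : form -> path
| PSeq  : path -> path -> path
with form : Type :=
| FProp : nat -> form
| FNom  : nat -> form
| FBot  : form
| FImp  : form -> form -> form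
| FAt   : nat -> form -> form
| FDia  : Mod -> form -> form
| FEq   : path -> Cmp -> path -> form
| FNeq  : path -> Cmp -> path -> form.

Definition FNeg (phi : form) : form := FImp phi FBot.
Definition FTop : form := FImp FBot FBot.
Definition FAnd (phi psi : form) : form := FNeg (FImp phi (FNeg psi)).

Fixpoint dia (alpha : path) (phi : form) : form :=
  match alpha with
  | PMod a => FDia a phi
  | PNom j => FAt j phi
  | PTest psi => FAnd psi phi
  | PSeq a1 a2 => dia a1 (dia a2 phi)
  end.

(* blacktriangle: b = true is =_c, b = false is !=_c *)
Definition tri (b : bool) (alpha : path) (c : Cmp) (beta : path) : form :=
  if b then FEq alpha c beta else FNeq alpha c beta.

Fixpoint noms_path (alpha : path) : list nat :=
  match alpha with
  | PMod _ => []
  | PNom i => [i]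
  | PTest phi => noms_form phi
  | PSeq a b => noms_path a ++ noms_path b
  end
with noms_form (phi : form) : list nat :=
  match phi with
  | FProp _ | FBot => []
  | FNom i => [i]
  | FImp a b => noms_form a ++ noms_form b
  | FAt i a => i :: noms_form a
  | FDia _ a => noms_form a
  | FEq a _ b | FNeq a _ b => noms_path a ++ noms_path b
  end.

Definition occurs (j : nat) (G D : list form) : Prop :=
  exists phi, In phi (G ++ D) /\ In j (noms_form phi).

Definition seqform (phi : form) : Prop :=
  match phi with
  | FAt _ _ => True
  | FEq (PNom _) _ (PNom _) => True
  | FNeq (PNom _) _ (PNom _) => True
  | _ => False
  end.

Definition seqwf (G D : list form) : Prop :=
  forall phi, In phi (G ++ D) -> seqform phi.

Definition axform (phi : form) : Prop :=
  (exists i p, phi = FAt i (FProp p)) \/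
  (exists i j, phi = FAt i (FNom j)) \/
  (exists i c j, phi = FEq (PNom i) c (PNom j)).

Definition s1form (phi : form) : Prop :=
  (exists p, phi = FProp p) \/ phi = FBot \/ (exists a k, phi = FDia a (FNom k)).

Definition eqn (i : nat) (c : Cmp) (j : nat) : form := FEq (PNom i) c (PNom j).
Definition neqn (i : nat) (c : Cmp) (j : nat) : form := FNeq (PNom i) c (PNom j).

(* Provability in G.  Sequents are finite SETS of formulas, represented by
   lists; the rule [pr_set] identifies lists with the same members. *)
Inductive provable : list form -> list form -> Prop :=
| pr_set G D G' D' :
    provable G D -> (forall x, In x G <-> In x G') -> (forall x, In x D <-> In x D') ->
    provable G' D'
| pr_Ax phi G D : seqwf (phi :: G) (phi :: D) -> axform phi -> provable (phi :: G) (phi :: D)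
| pr_Bot i G D : seqwf (FAt i FBot :: G) D -> provable (FAt i FBot :: G) D
| pr_ImpL i phi psi G D :
    provable G (FAt i phi :: D) -> provable (FAt i psi :: G) D ->
    provable (FAt i (FImp phi psi) :: G) D
| pr_ImpR i phi psi G D :
    provable (FAt i phi :: G) (FAt i psi :: D) -> provable G (FAt i (FImp phi psi) :: D)
| pr_AtT i G D : provable (FAt i (FNom i) :: G) D -> provable G D
| pr_At5 i j k G D :
    provable (FAt j (FNom k) :: FAt i (FNom j) :: FAt i (FNom k) :: G) D ->
    provable (FAt i (FNom j) :: FAt i (FNom k) :: G) D
| pr_Nom i j G D :
    provable (FAt i (FNom j) :: G) D -> ~ occurs j G D -> provable G D
| pr_S1 i j phi G D : s1form phi ->
    provable (FAt j phi :: FAt i (FNom j) :: FAt i phi :: G) D ->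
    provable (FAt i (FNom j) :: FAt i phi :: G) D
| pr_S2 i j k a G D :
    provable (FAt i (FDia a (FNom k)) :: FAt j (FNom k) :: FAt i (FDia a (FNom j)) :: G) D ->
    provable (FAt j (FNom k) :: FAt i (FDia a (FNom j)) :: G) D
| pr_S3 i j k c G D :
    provable (eqn j c k :: FAt i (FNom j) :: eqn i c k :: G) D ->
    provable (FAt i (FNom j) :: eqn i c k :: G) D
| pr_AtL i j phi G D : provable (FAt i phi :: G) D -> provable (FAt j (FAt i phi) :: G) D
| pr_AtR i j phi G D : provable G (FAt i phi :: D) -> provable G (FAt j (FAt i phi) :: D)
| pr_DiaL i j a phi G D :
    provable (FAt i (FDia a (FNom j)) :: FAt j phi :: G) D ->
    ~ occurs j (FAt i (FDia a phi) :: G) D ->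
    provable (FAt i (FDia a phi) :: G) D
| pr_DiaR i j a phi G D :
    provable (FAt i (FDia a (FNom j)) :: G) (FAt i (FDia a phi) :: FAt j phi :: D) ->
    provable (FAt i (FDia a (FNom j)) :: G) (FAt i (FDia a phi) :: D)
| pr_CmpL (b : bool) i j k c alpha beta G D :
    provable (FAt i (dia alpha (FNom j)) :: FAt i (dia beta (FNom k)) ::
              tri b (PNom j) c (PNom k) :: G) D ->
    j <> k ->
    ~ occurs j (FAt i (tri b alpha c beta) :: G) D ->
    ~ occurs k (FAt i (tri b alpha c beta) :: G) D ->
    provable (FAt i (tri b alpha c beta) :: G) D
| pr_CmpR (b : bool) i j k c alpha beta G D :
    provable (FAt i (dia alpha (FNom j)) :: FAt i (dia beta (FNom k)) :: G)
             (FAt i (tri b alpha c beta) :: tri b (PNom j) c (PNom k) :: D) ->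
    provable (FAt i (dia alpha (FNom j)) :: FAt i (dia beta (FNom k)) :: G)
             (FAt i (tri b alpha c beta) :: D)
| pr_EqT i c G D : provable (eqn i c i :: G) D -> provable G D
| pr_Eq5 i j k c G D :
    provable (eqn j c k :: eqn i c j :: eqn i c k :: G) D ->
    provable (eqn i c j :: eqn i c k :: G) D
| pr_NEqL i j c G D : provable G (eqn i c j :: D) -> provable (neqn i c j :: G) D
| pr_NEqR i j c G D : provable (eqn i c j :: G) D -> provable G (neqn i c j :: D)
| pr_Cut phi G D G' D' :
    provable G (phi :: D) -> provable (phi :: G') D' -> provable (G ++ G') (D ++ D')
| pr_WL phi G D : seqform phi -> provable G D -> provable (phi :: G) D
| pr_WR phi G D : seqform phi -> provable G D -> provable G (phi :: D).

End Syntax.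

Arguments PMod {Mod Cmp}. Arguments PNom {Mod Cmp}. Arguments PTest {Mod Cmp}.
Arguments PSeq {Mod Cmp}. Arguments FProp {Mod Cmp}. Arguments FNom {Mod Cmp}.
Arguments FBot {Mod Cmp}. Arguments FImp {Mod Cmp}. Arguments FAt {Mod Cmp}.
Arguments FDia {Mod Cmp}. Arguments FEq {Mod Cmp}. Arguments FNeq {Mod Cmp}.

Record model (Mod Cmp : Type) := Model {
  N : Type;
  N_inhabited : inhabited N;
  R : Mod -> N -> N -> Prop;
  E : Cmp -> N -> N -> Prop;
  E_refl : forall c x, E c x x;
  E_sym : forall c x y, E c x y -> E c y x;
  E_trans : forall c x y z, E c x y -> E c y z -> E c x z;
  g : nat -> N;
  V : nat -> N -> Prop
}.

Section Semantics.
Variables (Mod Cmp : Type) (M : model Mod Cmp).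

Fixpoint path_sem (n n' : N M) (alpha : path Mod Cmp) : Prop :=
  match alpha with
  | PMod a => R M a n n'
  | PNom i => g M i = n'
  | PTest phi => n = n' /\ form_sem n phi
  | PSeq a b => exists n'', path_sem n n'' a /\ path_sem n'' n' b
  end
with form_sem (n : N M) (phi : form Mod Cmp) : Prop :=
  match phi with
  | FProp p => V M p n
  | FNom i => g M i = n
  | FBot => False
  | FImp a b => form_sem n a -> form_sem n b
  | FAt i a => form_sem (g M i) a
  | FDia a b => exists n', R M a n n' /\ form_sem n' b
  | FEq a c b => exists n1 n2, path_sem n n1 a /\ path_sem n n2 b /\ E M c n1 n2
  | FNeq a c b => exists n1 n2, path_sem n n1 a /\ path_sem n n2 b /\ ~ E M c n1 n2
  end.

End Semantics.

Definition valid (Mod Cmp : Type) (G D : list (form Mod Cmp)) : Prop :=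
  forall (M : model Mod Cmp) (n : N M),
    (forall gam, In gam G -> form_sem M n gam) ->
    exists del, In del D /\ form_sem M n del.

(* Main.v *)
Require Import Defs.
From Stdlib Require Import List Classical PeanoNat.
Import ListNotations.

Section Aux.
Variables (Mod Cmp : Type).

Definition upd (M : model Mod Cmp) (j : nat) (x : N M) : model Mod Cmp :=
  @Model Mod Cmp (N M) (N_inhabited M) (R M) (E M) (E_refl M) (E_sym M) (E_trans M)
    (fun k => if Nat.eqb k j then x else g M k) (V M).

Lemma g_upd_ne M j x i : i <> j -> g (upd M j x) i = g M i.
Proof. intro H; simpl. destruct (Nat.eqb_spec i j); congruence. Qed.

Lemma g_upd_eq M j x : g (upd M j x) j = x.
Proof. simpl. now rewrite Nat.eqb_refl. Qed.

Scheme path_ind' := Induction for path Sort Prop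
with form_ind' := Induction for form Sort Prop.
Combined Scheme pf_ind from path_ind', form_ind'.

Lemma inv_upd M j x :
  (forall alpha : path Mod Cmp, ~ In j (noms_path alpha) ->
     forall n n', path_sem (upd M j x) n n' alpha <-> path_sem M n n' alpha) /\
  (forall phi : form Mod Cmp, ~ In j (noms_form phi) ->
     forall n, form_sem (upd M j x) n phi <-> form_sem M n phi).
Proof.
  apply pf_ind; cbn [path_sem form_sem noms_path noms_form]; intros; cbn [In] in *.
  - tauto.
  - rewrite g_upd_ne; [tauto| intro; subst; simpl in *; tauto].
  - rewrite H; tauto.
  - rewrite in_app_iff in H1. split; intros [m [h1 h2]]; exists m.
    + rewrite <- H, <- H0; tauto.
    + rewrite H, H0; tauto.
  - tauto.
  - rewrite g_upd_ne; [tauto| intro; subst; simpl in *; tauto].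
  - tauto.
  - rewrite in_app_iff in H1. rewrite H, H0; tauto.
  - rewrite g_upd_ne by tauto. apply H. tauto.
  - split; intros [w [h1 h2]]; exists w; [rewrite <- H | rewrite H]; tauto.
  - rewrite in_app_iff in H1.
    split; intros [m1 [m2 [h1 [h2 h3]]]]; exists m1, m2.
    + rewrite <- H, <- H0; tauto.
    + rewrite H, H0; tauto.
  - rewrite in_app_iff in H1.
    split; intros [m1 [m2 [h1 [h2 h3]]]]; exists m1, m2.
    + rewrite <- H, <- H0; tauto.
    + rewrite H, H0; tauto.
Qed.

Lemma dia_sem M alpha : forall (phi : form Mod Cmp) n,
  form_sem M n (dia alpha phi) <-> exists n', path_sem M n n' alpha /\ form_sem M n' phi.
Proof.
  induction alpha; intros; simpl.
  - tauto.
  - split; [intro; exists (g M n); tauto | intros [m [<- h]]; auto].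
  - split.
    + intro h. exists n. destruct (classic (form_sem M n f)); destruct (classic (form_sem M n phi)); tauto.
    + intros [m [[<- h1] h2]]. tauto.
  - rewrite IHalpha1. split.
    + intros [m [h1 h2]]. rewrite IHalpha2 in h2. destruct h2 as [m' [h3 h4]]. eauto.
    + intros [m' [[m [h1 h2]] h3]]. exists m. rewrite IHalpha2. eauto.
Qed.

Definition Sat (M : model Mod Cmp) (n : N M) (L : list (form Mod Cmp)) :=
  forall gam, In gam L -> form_sem M n gam.

Lemma sat_upd M j x n L :
  (forall phi, In phi L -> ~ In j (noms_form phi)) ->
  Sat (upd M j x) n L <-> Sat M n L.
Proof.
  intros H; split; intros h gam hg; specialize (h gam hg);
  [rewrite <- (proj2 (inv_upd M j x)) | rewrite (proj2 (inv_upd M j x))]; auto.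
Qed.

Lemma ex_upd M j x n L :
  (forall phi, In phi L -> ~ In j (noms_form phi)) ->
  (exists d, In d L /\ form_sem (upd M j x) n d) -> exists d, In d L /\ form_sem M n d.
Proof.
  intros H [d [h1 h2]]. exists d. split; auto.
  rewrite (proj2 (inv_upd M j x)) in h2; auto.
Qed.

End Aux.
Arguments upd {Mod Cmp}. Arguments g_upd_ne {Mod Cmp}. Arguments g_upd_eq {Mod Cmp}.
Arguments inv_upd {Mod Cmp}. Arguments dia_sem {Mod Cmp}. Arguments Sat {Mod Cmp}.
Arguments sat_upd {Mod Cmp}. Arguments ex_upd {Mod Cmp}.

Section Sound.
Variables (Mod Cmp : Type).

Lemma nocc (j : nat) (G D : list (form Mod Cmp)) : ~ occurs j G D ->
  (forall phi, In phi G -> ~ In j (noms_form phi)) /\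
  (forall phi, In phi D -> ~ In j (noms_form phi)).
Proof.
  intro H; split; intros phi h1 h2; apply H; exists phi; split; auto;
  apply in_app_iff; auto.
Qed.

Ltac hd HG := let h := fresh "h" in pose proof (HG _ (or_introl eq_refl)) as h; simpl in h.
Ltac tl HG := exact (fun gam h => HG gam (or_intror h)).

Lemma soundness (G D : list (form Mod Cmp)) : provable G D -> valid G D.
Proof.
  induction 1; red; intros M n HG.
  -
    destruct (IHprovable M n (fun gam h => HG gam (proj1 (H0 gam) h))) as [d [h1 h2]].
    exists d; split; auto. apply H1; auto.
  - exists phi; split; [left; auto | apply HG; left; auto].
  - hd HG. contradiction.
  - destruct (IHprovable1 M n ltac:(tl HG)) as [d [[<-|hd] hs]].
    + hd HG. apply IHprovable2. intros gam [<-|h']; [exact (h hs)| apply HG; right; auto].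
    + eauto.
  - destruct (classic (form_sem M (g M i) phi)) as [Hp|Hp].
    + destruct (IHprovable M n) as [d [[<-|hd] hs]].
      * intros gam [<-|h']; auto.
      * exists (FAt i (FImp phi psi)); split; [left; auto| simpl; auto].
      * exists d; split; [right|]; auto.
    + exists (FAt i (FImp phi psi)); split; [left; auto| simpl; tauto].
  - apply IHprovable. intros gam [<-|h']; [reflexivity| auto].
  - apply IHprovable. hd HG. pose proof (HG _ (or_intror (or_introl eq_refl))) as h2. simpl in h2.
    intros gam [<-|h']; [simpl; congruence| auto].
  -
    destruct (nocc _ _ _ H0) as [nG nD].
    apply (ex_upd M j (g M i) n D nD).
    apply IHprovable. intros gam [<-|h'].
    + cbn [form_sem]. destruct (Nat.eq_dec i j) as [->|ne]; [reflexivity|].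
      rewrite g_upd_eq, g_upd_ne; auto.
    + apply (proj2 (sat_upd M j (g M i) n G nG)); auto.
  - apply IHprovable. hd HG. pose proof (HG _ (or_intror (or_introl eq_refl))) as h2. simpl in h2.
    intros gam [<-|h']; [simpl; rewrite h; auto| auto].
  - apply IHprovable. hd HG. pose proof (HG _ (or_intror (or_introl eq_refl))) as h2. simpl in h2.
    destruct h2 as [m [hm1 hm2]].
    intros gam [<-|h']; [simpl; exists m; split; congruence| auto].
  - apply IHprovable. hd HG. pose proof (HG _ (or_intror (or_introl eq_refl))) as h2. simpl in h2.
    destruct h2 as [m1 [m2 [e1 [e2 e3]]]].
    intros gam [<-|h']; [simpl; exists m1, m2; split; [congruence| split; auto]| auto].
  - apply IHprovable. intros gam [<-|h']; [exact (HG _ (or_introl eq_refl))| apply HG; right; auto].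
  - destruct (IHprovable M n HG) as [d [[<-|hd] hs]]; [exists (FAt j (FAt i phi)); split; [left|]; auto|].
    exists d; split; [right|]; auto.
  -
    hd HG. destruct h as [m [hm1 hm2]].
    destruct (nocc _ _ _ H0) as [nG nD].
    assert (ni : ~ In j (i :: noms_form phi)) by (exact (nG _ (or_introl eq_refl))).
    assert (nij : i <> j) by (simpl in ni; tauto).
    assert (nphi : ~ In j (noms_form phi)) by (simpl in ni; tauto).
    apply (ex_upd M j m n D nD).
    apply IHprovable. intros gam [<-|[<-|h']].
    + cbn [form_sem]. rewrite g_upd_ne by auto. exists m; split; [exact hm1| apply g_upd_eq].
    + cbn [form_sem]. rewrite g_upd_eq. apply (proj2 (inv_upd M j m)); auto.
    + apply (proj2 (sat_upd M j m n G (fun p hp => nG p (or_intror hp)))); [|auto].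
      intros gam' hg. apply HG; right; auto.
  -
    destruct (IHprovable M n HG) as [d [[<-|[<-|hd]] hs]].
    + exists (FAt i (FDia a phi)); split; [left|]; auto.
    + hd HG. destruct h as [m [hm1 hm2]]. exists (FAt i (FDia a phi)); split; [left; auto|].
      simpl in *. exists m; split; [auto| congruence].
    + exists d; split; [right|]; auto.
  -
    destruct (nocc _ _ _ H1) as [nGj nDj].
    destruct (nocc _ _ _ H2) as [nGk nDk].
    pose proof (nGj _ (or_introl eq_refl)) as nj. pose proof (nGk _ (or_introl eq_refl)) as nk.
    assert (tn : noms_form (tri b alpha c beta) = noms_path alpha ++ noms_path beta) by (destruct b; reflexivity).
    cbn [noms_form] in nj, nk. rewrite tn in nj, nk.
    assert (nij : i <> j) by (intro; apply nj; left; auto).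
    assert (nik : i <> k) by (intro; apply nk; left; auto).
    assert (ja : ~ In j (noms_path alpha)) by (intro; apply nj; right; apply in_app_iff; auto).
    assert (jb : ~ In j (noms_path beta)) by (intro; apply nj; right; apply in_app_iff; auto).
    assert (ka : ~ In k (noms_path alpha)) by (intro; apply nk; right; apply in_app_iff; auto).
    assert (kb : ~ In k (noms_path beta)) by (intro; apply nk; right; apply in_app_iff; auto).
    pose proof (HG _ (or_introl eq_refl)) as h.
    assert (Hex: exists n1 n2, path_sem M (g M i) n1 alpha /\ path_sem M (g M i) n2 beta /\
       (if b then E M c n1 n2 else ~ E M c n1 n2)) by (destruct b; exact h).
    destruct Hex as [n1 [n2 [p1 [p2 e]]]].
    apply (ex_upd M j n1 n D nDj). apply (ex_upd (upd M j n1) k n2 n D nDk).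
    apply IHprovable. intros gam [<-|[<-|[<-|h']]].
    + cbn [form_sem]. apply dia_sem. exists n1. split.
      * rewrite g_upd_ne by auto. rewrite g_upd_ne by auto.
        apply (proj1 (inv_upd (upd M j n1) k n2) alpha ka), (proj1 (inv_upd M j n1) alpha ja). exact p1.
      * cbn [form_sem]. rewrite g_upd_ne by auto. exact (g_upd_eq M j n1).
    + cbn [form_sem]. apply dia_sem. exists n2. split.
      * rewrite g_upd_ne by auto. rewrite g_upd_ne by auto.
        apply (proj1 (inv_upd (upd M j n1) k n2) beta kb), (proj1 (inv_upd M j n1) beta jb). exact p2.
      * cbn [form_sem]. apply g_upd_eq.
    + destruct b; cbn [tri form_sem path_sem]; exists n1, n2;
        (split; [rewrite g_upd_ne by auto; exact (g_upd_eq M j n1)| split; [exact (g_upd_eq (upd M j n1) k n2)| exact e]]).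
    + apply (proj2 (sat_upd (upd M j n1) k n2 n G (fun p hp => nGk p (or_intror hp)))).
      apply (proj2 (sat_upd M j n1 n G (fun p hp => nGj p (or_intror hp)))).
      intros gam' hg. apply HG; right; auto.
      auto.
  -
    destruct (IHprovable M n HG) as [d [[<-|[<-|hd]] hs]].
    + exists (FAt i (tri b alpha c beta)); split; [left|]; auto.
    + hd HG. pose proof (HG _ (or_intror (or_introl eq_refl))) as h2. simpl in h2.
      rewrite dia_sem in h, h2. destruct h as [m1 [p1 q1]]. destruct h2 as [m2 [p2 q2]].
      exists (FAt i (tri b alpha c beta)); split; [left; auto|].
      destruct b; simpl in *; destruct hs as [x1 [x2 [e1 [e2 e3]]]]; exists m1, m2;
        subst; auto.
    + exists d; split; [right|]; auto.
  - apply IHprovable. intros gam [<-|h']; [| auto]. simpl. exists (g M i), (g M i).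
    split; [auto| split; [auto| apply E_refl]].
  - apply IHprovable. hd HG. pose proof (HG _ (or_intror (or_introl eq_refl))) as h2. simpl in h, h2.
    destruct h as [m1 [m2 [e1 [e2 e3]]]]. destruct h2 as [m3 [m4 [e4 [e5 e6]]]].
    intros gam [<-|h']; [| auto]. simpl. exists m2, m4. subst.
    split; [auto| split; [auto|]]. eapply E_trans; [apply E_sym; eauto| eauto].
  - destruct (IHprovable M n ltac:(tl HG)) as [d [[<-|hd] hs]]; [|eauto].
    hd HG. simpl in hs, h. destruct hs as [m1 [m2 [e1 [e2 e3]]]]. destruct h as [m3 [m4 [e4 [e5 e6]]]].
    subst. contradiction.
  - destruct (classic (form_sem M n (eqn Mod i c j))) as [Hp|Hp].
    + destruct (IHprovable M n) as [d [hd hs]].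
      * intros gam [<-|h']; auto.
      * exists d; split; [right|]; auto.
    + exists (neqn Mod i c j); split; [left; auto|]. simpl in *.
      exists (g M i), (g M j). split; [auto| split; [auto|]]. intro e. apply Hp.
      exists (g M i), (g M j). auto.
  -
    destruct (IHprovable1 M n) as [d [[<-|hd] hs]].
    + intros gam h'; apply HG, in_app_iff; auto.
    + destruct (IHprovable2 M n) as [d' [hd' hs']].
      * intros gam [<-|h']; [auto| apply HG, in_app_iff; auto].
      * exists d'; split; [apply in_app_iff; auto| auto].
    + exists d; split; [apply in_app_iff; auto| auto].
  - apply IHprovable. tl HG.
  - destruct (IHprovable M n HG) as [d [hd hs]]. exists d; split; [right|]; auto.
Qed.
End Sound.
From mathcomp Require Import ssreflect ssrfun ssrbool eqtype choice fintype.

Theorem theorem1 (Mod Cmp : finType) (G D : list (form Mod Cmp)) :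
  seqwf G D -> provable G D -> valid G D.
Proof.
  intros _ H. exact (soundness _ _ _ _ H).
Qed.
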